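(* Let $F$ be a field whose characteristic is not $2$, and let $k\geq 4$ be an integer. (i) Let $x\in F$. If the characteristic of $F$ is not $3$ or $x\neq 0$, then $x$ can be written as $x=a_1+\cdots+a_k$ with $a_1,\ldots,a_k\in F$ and $a_1a_2\cdots a_k=-1$. (ii) If the characteristic of $F$ is not $3$, then every $x\in F$ can be written as $x=a_1+\cdots+a_k$ with $a_1,\ldots,a_k\in F$ and $a_1a_2\cdots a_k=1$. *)

(* Defs.v *)
From mathcomp Require Import all_boot all_algebra.
Set Implicit Arguments. Unset Strict Implicit. Unset Printing Implicit Defensive.

(* Main.v *)
Require Import Defs.
From mathcomp Require Import all_boot all_algebra.
From mathcomp Require Import ring.
Import GRing.Theory.
Local Open Scope ring_scope.

Lemma combine (F : fieldType) (b : 'I_4 -> F) (n m : nat) : (m <= n)%N ->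
  exists a : 'I_(4 + n) -> F,
    \sum_(i < 4 + n) a i = \sum_(i < 4) b i + ((n - m)%:R - m%:R) /\
    \prod_(i < 4 + n) a i = \prod_(i < 4) b i * (-1) ^+ m.
Proof.
move=> mn; move: (n - m)%N (subnKC mn) => p <-.
exists (fun i => match split i with inl j => b j
   | inr j => match split j with inl _ => -1 | inr _ => 1 end end).
rewrite !big_split_ord /=.
have L1 q r (j : 'I_q) : split (lshift r j) = inl j := unsplitK (inl j).
have R1 q r (j : 'I_r) : split (rshift q j) = inr j := unsplitK (inr j).
split.
  rewrite (eq_bigr b); last by move=> i _; rewrite L1.
  rewrite [X in _ + (X + _)](eq_bigr (fun _ => -1)); last by move=> i _; rewrite R1 L1.
  rewrite [X in _ + (_ + X)](eq_bigr (fun _ => 1)); last by move=> i _; rewrite !R1.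
  by rewrite !sumr_const !card_ord; congr (_ + _); rewrite addrC mulNrn.
rewrite [X in X * _ = _](eq_bigr b); last by move=> i _; rewrite L1.
rewrite [X in _ * (X * _)](eq_bigr (fun _ => -1)); last by move=> i _; rewrite R1 L1.
rewrite [X in _ * (_ * X)](eq_bigr (fun _ => 1)); last by move=> i _; rewrite !R1.
by rewrite !prodr_const !card_ord expr1n mulr1.
Qed.

Lemma charE (F : fieldType) p : prime p -> (p \in [pchar F])%N = (p%:R == 0 :> F).
Proof. by move=> pp; rewrite inE /= pp. Qed.

Lemma comb4 (F : fieldType) (a0 a1 a2 a3 : F) (n m : nat) : (m <= n)%N ->
  exists a : 'I_(4 + n) -> F,
    \sum_(i < 4 + n) a i = a0 + a1 + a2 + a3 + ((n - m)%:R - m%:R) /\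
    \prod_(i < 4 + n) a i = a0 * a1 * a2 * a3 * (-1) ^+ m.
Proof.
move=> mn; have [a [h1 h2]] := @combine F (fun i : 'I_4 => nth 0 [:: a0; a1; a2; a3] i) n m mn.
by exists a; rewrite h1 h2 !big_ord_recr !big_ord0 /= add0r mul1r.
Qed.

Theorem theorem1p2 (F : fieldType) (k : nat) :
  (2 \notin [pchar F])%N -> (4 <= k)%N ->
  (forall x : F, ((3 \notin [pchar F])%N \/ x != 0) ->
     exists a : 'I_k -> F, x = \sum_(i < k) a i /\ \prod_(i < k) a i = -1)
  /\
  ((3 \notin [pchar F])%N ->
     forall x : F,
     exists a : 'I_k -> F, x = \sum_(i < k) a i /\ \prod_(i < k) a i = 1).
Proof.
rewrite charE // => two Hk.
have [n ->] : exists n, k = (4 + n)%N by exists (k-4)%N; rewrite subnKC.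
split.
- move=> x H3.
  case: (eqVneq x n%:R) => [xn | xn].
  + case: (boolP (3 \in [pchar F])) => [c3 | c3].
    * have x0 : x != 0 by case: H3 => //; rewrite c3.
      move: c3; rewrite charE // => /eqP h3.
      case: n xn => [|[|n]] xn.
      - by rewrite xn eqxx in x0.
      - have [a [h1 h2]] := @comb4 F (-1) (-1) (-1) (-1) 1 1 isT.
        exists a; rewrite h1 h2 subnn xn; split; last by ring.
        transitivity (1 - 2%:R * 3%:R : F); first by rewrite h3 mulr0 subr0.
        by ring.
      - have [a [h1 h2]] := @comb4 F (1/2) (-(1/2)) 2 2 n.+2 2 isT.
        exists a; rewrite h1 h2 xn !subSS subn0; split.
          rewrite -addn2 natrD. by field.
        by field.
    * have [a [h1 h2]] := @comb4 F (-3%:R) (1/6%:R) (3%:R/2) (4%:R/3%:R) n 0 isT.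
      move: c3; rewrite charE // => h3.
      have six : (6%:R : F) != 0 by rewrite (natrM F 2 3) mulf_neq0.
      exists a; rewrite h1 h2 xn subn0 subr0 expr0 mulr1; split.
        by field; rewrite ?two ?h3 ?six.
      by field; rewrite ?two ?h3 ?six.
  + have y0 : x - n%:R != 0 by rewrite subr_eq0.
    set y := x - n%:R in y0.
    have ey : x = y + n%:R by rewrite /y subrK.
    clearbody y; rewrite ey.
    have [a [h1 h2]] := @comb4 F (2/y) (-(2/y)) (y/2) (y/2) n 0 isT.
    exists a; rewrite h1 h2 subn0 subr0 expr0 mulr1; split.
      by field; rewrite ?two ?y0.
    by field; rewrite ?two ?y0.
- rewrite charE // => h3 x.
  case: (eqVneq (x - n%:R) 0) => [y0|y0].
    have [a [h1 h2]] := @comb4 F 1 1 (-1) (-1) n 0 isT.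
    exists a; rewrite h1 h2 subn0 subr0; split; last by ring.
    by move/eqP: y0; rewrite subr_eq0 => /eqP ->; ring.
  set y := x - n%:R in y0.
  have ey : x = y + n%:R by rewrite /y subrK.
  clearbody y; rewrite ey.
  have [a [h1 h2]] := @comb4 F (3%:R/(2*y)) (-(3%:R/(2*y))) (4%:R*y/3%:R) (-(y/3%:R)) n 0 isT.
  exists a; rewrite h1 h2 subn0 subr0 expr0 mulr1; split.
    by field; rewrite ?two ?y0 ?h3.
  by field; rewrite ?two ?y0 ?h3.
Qed.
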